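(* There exist infinitely many pairs $(n_1,n_2)$ of positive integers for each of which there are NFAs $A$ and $B$ over a binary alphabet, with $n_1$ and $n_2$ states respectively, such that there is no infinite tower of prefixes between $L(A)$ and $L(B)$ and there is a tower of prefixes between $L(A)$ and $L(B)$ whose height is superpolynomial in $n_1+n_2$ (that is, along this family the height is not bounded by any polynomial in $n_1+n_2$).
   Context: A string $v$ is a prefix of $w$, written $v\le w$, if $w=vu$ for some string $u$. A sequence $(w_i)_{i=1}^r$ of strings is a tower of prefixes between languages $K$ and $L$ if $w_1\in K\cup L$ and for all $i=1,\dots,r-1$: $w_i\le w_{i+1}$, $w_i\in K$ implies $w_{i+1}\in L$, and $w_i\in L$ implies $w_{i+1}\in K$; $r$ is its height. An infinite tower of prefixes is an infinite sequence with the same properties. *)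

(* Defs.v *)
From mathcomp Require Import all_boot.
Set Implicit Arguments. Unset Strict Implicit. Unset Printing Implicit Defensive.

Definition word := seq bool.

Record nfa (n : nat) := NFA {
  nfa_delta : 'I_n -> bool -> 'I_n -> bool;
  nfa_init : 'I_n -> bool;
  nfa_final : 'I_n -> bool }.

Fixpoint nfa_run (n : nat) (A : nfa n) (p : 'I_n) (w : word) (q : 'I_n) : Prop :=
  match w with
  | [::] => p = q
  | a :: w' => exists p', nfa_delta A p a p' /\ nfa_run A p' w' q
  end.

Definition lang (n : nat) (A : nfa n) : word -> Prop :=
  fun w => exists p q, nfa_init A p /\ nfa_final A q /\ nfa_run A p w q.

Definition is_prefix (v w : word) : Prop := exists u, w = v ++ u.

(* A (finite) tower of prefixes between K and L: a nonempty sequence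
   w_1, ..., w_r (listed as ws, r = size ws). *)
Definition tower (K L : word -> Prop) (ws : seq word) : Prop :=
  0 < size ws /\
  (K (nth [::] ws 0) \/ L (nth [::] ws 0)) /\
  (forall i, i.+1 < size ws ->
     is_prefix (nth [::] ws i) (nth [::] ws i.+1) /\
     (K (nth [::] ws i) -> L (nth [::] ws i.+1)) /\
     (L (nth [::] ws i) -> K (nth [::] ws i.+1))).

Definition height (ws : seq word) : nat := size ws.

Definition inf_tower (K L : word -> Prop) (w : nat -> word) : Prop :=
  (K (w 0) \/ L (w 0)) /\
  (forall i,
     is_prefix (w i) (w i.+1) /\
     (K (w i) -> L (w i.+1)) /\
     (L (w i) -> K (w i.+1))).

(* Main.v *)
Require Import Defs.
From mathcomp Require Import all_boot zify.
Set Implicit Arguments. Unset Strict Implicit. Unset Printing Implicit Defensive.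

Lemma sum_sub (I : finType) (P Q : pred I) (F : I -> nat) :
  (forall i, P i -> Q i) -> \sum_(i | P i) F i <= \sum_(i | Q i) F i.
Proof.
move=> H; rewrite [X in _ <= X](bigID P) /=.
rewrite (eq_bigl P) ?leq_addr // => i; case: (boolP (P i)) => Pi /=;
  by [rewrite andbT (H _ Pi) | rewrite andbF].
Qed.

Section Gen.
Variable n : nat.
Variable d : 'I_n -> bool -> 'I_n -> bool.
Variable i0 : 'I_n -> bool.

Fixpoint runb (p : 'I_n) (w : word) (q : 'I_n) : bool :=
  match w with
  | [::] => p == q
  | a :: w' => [exists p', d p a p' && runb p' w' q]
  end.

Lemma runb_rcons p w x q : runb p (rcons w x) q = [exists r, runb p w r && d r x q].
Proof.
elim: w p => [|y w IH] p /=.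
  apply/existsP/existsP => [[p' /andP[H /eqP <-]]|[r /andP[/eqP <- H]]].
    by exists p; rewrite eqxx.
  by exists q; rewrite H eqxx.
apply/existsP/existsP => [[p' /andP[H]]|[r /andP[/existsP[p' /andP[H1 H2]] H3]]].
  rewrite IH => /existsP[r /andP[H1 H2]].
  by exists r; rewrite H2 andbT; apply/existsP; exists p'; rewrite H H1.
by exists p'; rewrite H1 IH; apply/existsP; exists r; rewrite H2 H3.
Qed.

Definition Sset w : {set 'I_n} := [set q | [exists p, i0 p && runb p w q]].

Lemma Sset_rcons w x q : q \in Sset (rcons w x) -> exists2 r, r \in Sset w & d r x q.
Proof.
rewrite inE => /existsP[p /andP[Hp]]; rewrite runb_rcons => /existsP[r /andP[H1 H2]].
by exists r => //; rewrite inE; apply/existsP; exists p; rewrite Hp.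
Qed.

Variable wt : 'I_n -> nat.
Definition Wt w := \sum_(q in Sset w) wt q.

Lemma Wt_rcons_aux w x :
  Wt (rcons w x) <= \sum_(r in Sset w) \sum_(q' | d r x q') wt q'.
Proof.
rewrite /Wt.
apply: (@leq_trans (\sum_(q' in Sset (rcons w x)) \sum_(r in Sset w) d r x q' * wt q')).
  apply: leq_sum => q' /Sset_rcons [r0 Hr0 Hd].
  by rewrite (bigD1 r0) //= Hd mul1n leq_addr.
rewrite exchange_big /=; apply: leq_sum => r _.
apply: (@leq_trans (\sum_(q' | d r x q') d r x q' * wt q')).
  rewrite [X in _ <= X](big_mkcond) /= [X in X <= _](big_mkcond) /=.
  by apply: leq_sum => i _; case: (i \in _); case: (d r x i).
by apply: leq_sum => i ->; rewrite mul1n.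
Qed.

Lemma Wt_rcons_le (Hwt : forall q x, \sum_(q' | d q x q') wt q' <= wt q) w x :
  Wt (rcons w x) <= Wt w.
Proof.
apply: leq_trans (Wt_rcons_aux w x) _; exact: leq_sum.
Qed.

Lemma Wt_rcons_lt (Hwt : forall q x, \sum_(q' | d q x q') wt q' <= wt q) (m : 'I_n)
  (Hm : forall q x, d q x m -> \sum_(q' | d q x q') wt q' < wt q) w x :
  m \in Sset (rcons w x) -> Wt (rcons w x) < Wt w.
Proof.
move=> /Sset_rcons [r0 Hr0 Hd].
apply: (leq_ltn_trans (Wt_rcons_aux w x)); rewrite /Wt.
rewrite (bigD1 r0) //= [X in _ <= X](bigD1 r0) //=.
have H1 := Hm _ _ Hd.
have H2 : \sum_(i in Sset w | i != r0) \sum_(q' | d i x q') wt q' <= \sum_(i in Sset w | i != r0) wt i.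
  by apply: leq_sum.
set a := \sum_(_ in _ | _) _ in H2 *; set b := \sum_(_ in _ | _) _ in H2 *; set c := \sum_(_ | _) _ in H1 *. lia.
Qed.

Lemma Wt_cat_le (Hwt : forall q x, \sum_(q' | d q x q') wt q' <= wt q) w u :
  Wt (w ++ u) <= Wt w.
Proof.
elim/last_ind: u => [|u x IH]; first by rewrite cats0.
by rewrite -rcons_cat; apply: leq_trans (Wt_rcons_le Hwt _ _) IH.
Qed.

End Gen.

Lemma runP n (A : nfa n) p w q : reflect (nfa_run A p w q) (runb (nfa_delta A) p w q).
Proof.
elim: w p => [|x w IH] p /=; first exact: eqP.
apply: (iffP existsP) => [[p' /andP[H1 /IH H2]]|[p' [H1 /IH H2]]]; exists p'; first by [].
by rewrite H1 H2.
Qed.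

Lemma langS n (A : nfa n) w :
  lang A w <-> exists q, nfa_final A q /\ q \in Sset (nfa_delta A) (nfa_init A) w.
Proof.
split => [[p [q [H1 [H2 /runP H3]]]]|[q [H1]]].
  by exists q; split => //; rewrite inE; apply/existsP; exists p; rewrite H1 H3.
by rewrite inE => /existsP[p /andP[H2 /runP H3]]; exists p, q.
Qed.

Lemma run_cat n (A : nfa n) p u v q r :
  nfa_run A p u r -> nfa_run A r v q -> nfa_run A p (u ++ v) q.
Proof.
elim: u p => [|x u IH] p /=; first by move=> ->.
by move=> [p' [H1 H2]] H3; exists p'; split => //; apply: IH H3.
Qed.

Lemma sum_pow2 j : \sum_(i < j) 2 ^ i < 2 ^ j.
Proof.
elim: j => [|j IH]; first by rewrite big_ord0.
rewrite big_ord_recr /= expnS.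
have -> : \sum_(i < j) 2 ^ (@widen_ord j j.+1 (leqnSn j) i) = \sum_(i < j) 2 ^ i by [].
lia.
Qed.

Section Aut.
Variable T : nat.
Hypothesis HT : 0 < T.
Local Notation N := (T * T + 2).

Definition mk (j : nat) := if j == 0 then T * T else (T * T).+1.

Definition dn (s : nat) (x : bool) (s' : nat) : bool :=
  (s < T * T) && (if x then ((s %/ T).+1 < T) && (s' == s + T)
   else if s %/ T != s %% T then s' == s %% T
   else (s' < s %% T) || (s' == mk (s %% T))).

Definition dA (p : 'I_N) (x : bool) (q : 'I_N) : bool := dn (p : nat) x (q : nat).
Definition iA (p : 'I_N) : bool := (p : nat) < T.
Definition wt (q : 'I_N) : nat := if (q : nat) < T * T then 2 ^ ((q : nat) %% T) else 0.

Lemma wt_bound (q : 'I_N) x :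
  \sum_(q' | dA q x q') wt q' + [exists q', dA q x q' && (T * T <= (q' : nat))] <= wt q.
Proof.
rewrite /wt /dA /dn.
case: (ltnP (q : nat) (T * T)) => Hq /=; last first.
  rewrite big_pred0 //; case: existsP => // -[? //].
case: x.
  case: (ltnP ((q : nat) %/ T).+1 T) => Hc /=; last first.
    by rewrite big_pred0 //; case: existsP => // -[? //].
  have Hq2 : (q : nat) + T < T * T.
    have := divn_eq (q : nat) T; have := ltn_pmod (q : nat) HT; nia.
  have Hq1 : (q : nat) + T < N by lia.
  rewrite (eq_bigl (pred1 (Ordinal Hq1))) ?big_pred1_eq /=; last first.
    by move=> i; rewrite /= -val_eqE.
  rewrite Hq2 modnDr.
  case: existsP => [[q' /andP[/eqP E H]]|_]; lia.
have Hj := ltn_pmod (q : nat) HT.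
case: eqP => Hcj /=; last first.
  have Hj1 : (q : nat) %% T < N by nia.
  rewrite (eq_bigl (pred1 (Ordinal Hj1))) ?big_pred1_eq /=; last first.
    by move=> i; rewrite /= -val_eqE.
  have -> : (q : nat) %% T < T * T by nia.
  rewrite modn_small //.
  case: existsP => [[q' /andP[/eqP E H]]|_]; nia.
set j := (q : nat) %% T.
have -> : [exists q' : 'I_N, (((q' : nat) < j) || ((q' : nat) == mk j)) && (T * T <= (q' : nat))].
  have Hm : mk j < N by rewrite /mk; case: (j == 0); lia.
  apply/existsP; exists (Ordinal Hm); rewrite /= eqxx orbT /mk; case: (j == 0); lia.
rewrite (bigID (fun q' : 'I_N => (q' : nat) < T * T)) /=.
rewrite [X in _ + X + _]big1 ?addn0; last first.
  by move=> i /andP[_ /negbTE ->].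
rewrite (eq_bigl (fun i : 'I_N => (i : nat) < j)); last first.
  move=> i /=; rewrite /mk; case: (j == 0); apply/idP/idP; try (case/andP; lia); lia.
rewrite (eq_bigr (fun i : 'I_N => 2 ^ (i : nat))); last first.
  by move=> i Hi; rewrite ifT ?modn_small //; nia.
rewrite -(big_ord_widen _ (fun i => 2 ^ i)); last by nia.
by rewrite addn1; apply: sum_pow2.
Qed.


Lemma wt_le q x : \sum_(q' | dA q x q') wt q' <= wt q.
Proof. have := wt_bound q x; lia. Qed.

Lemma wt_lt (m : 'I_N) q x : T * T <= m -> dA q x m -> \sum_(q' | dA q x q') wt q' < wt q.
Proof.
move=> Hm Hd; have := wt_bound q x.
have -> : [exists q', dA q x q' && (T * T <= q')] by apply/existsP; exists m; rewrite Hd.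
lia.
Qed.

Definition AK : nfa N := NFA dA iA (fun q => (q : nat) == T * T).
Definition AL : nfa N := NFA dA iA (fun q => (q : nat) == (T * T).+1).

Definition tb (w : word) := index false (rev w).

Lemma tb_rcons w x : tb (rcons w x) = if x then (tb w).+1 else 0.
Proof. by rewrite /tb rev_rcons /=; case: x. Qed.

Local Notation SS := (Sset dA iA).

Lemma SS_inv w (q : 'I_N) : q \in SS w -> q < T * T -> q %/ T = tb w.
Proof.
elim/last_ind: w q => [|w x IH] q.
  rewrite inE => /existsP[p /andP[Hp /eqP <-]] _; rewrite /tb /=.
  by rewrite divn_small.
move=> /Sset_rcons [r Hr]; rewrite /dA /dn tb_rcons => /andP[Hr1].
have := IH r Hr Hr1.
case: x => Hrt.
  case/andP => Hc /eqP -> _.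
  by rewrite -[T in _ + T]mul1n divnDMl // Hrt addn1.
have Hj := ltn_pmod (r : nat) HT.
case: eqP => _ /=.
  by move=> /orP[Hl|/eqP ->] Hq; [rewrite divn_small //; lia | move: Hq; rewrite /mk; case: ifP; lia].
by move=> /eqP -> _; rewrite divn_small.
Qed.

Lemma SS_nil (q : 'I_N) : q \in SS [::] -> q < T.
Proof. by rewrite inE => /existsP[p /andP[Hp /eqP <-]]. Qed.

Lemma SS_marker w x (q : 'I_N) : q \in SS (rcons w x) -> T * T <= q ->
  x = false /\ (q : nat) = mk (tb w).
Proof.
move=> /Sset_rcons [r Hr]; rewrite /dA /dn => /andP[Hr1].
have := SS_inv Hr Hr1.
case: x => Hrt.
  case/andP => Hc /eqP ->.
  have := divn_eq (r : nat) T; have := ltn_pmod (r : nat) HT; nia.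
have Hj := ltn_pmod (r : nat) HT.
case: eqP => Hcj /=.
  by move=> /orP[Hl|/eqP ->] Hq; [lia | split => //; rewrite -Hrt Hcj].
move=> /eqP ->; nia.
Qed.

Lemma disj w : lang AK w -> lang AL w -> False.
Proof.
move=> /langS [q [/eqP Hq HqS]] /langS [q' [/eqP Hq' Hq'S]].
case/lastP: w HqS Hq'S => [|w x] HqS Hq'S.
  by have := SS_nil HqS; nia.
have [_ E1] := SS_marker HqS (eq_leq (esym Hq)).
have [_ E2] := SS_marker Hq'S (ltnW (eq_leq (esym Hq'))).
move: E1 E2; rewrite Hq Hq' /mk; case: ifP; lia.
Qed.

Lemma no_inf : ~ exists w : nat -> word, inf_tower (lang AK) (lang AL) w.
Proof.
move=> [w [H0 HS]].
have Hin : forall i, lang AK (w i) \/ lang AL (w i).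
  elim => // i [H|H]; have [_ [H1 H2]] := HS i; [right; exact: H1 | left; exact: H2].
have Hdec : forall i, Wt dA iA wt (w i.+1) < Wt dA iA wt (w i).
  move=> i; have [[u Hu] [H1 H2]] := HS i.
  have Hne : u <> [::].
    move=> Eu; rewrite Eu cats0 in Hu.
    by case: (Hin i) => H; [apply: (disj H); rewrite -Hu; apply: H1 | apply: (disj _ H); rewrite -Hu; apply: H2].
  case/lastP: u Hu Hne => [//|u x] Hu _.
  have [q [Hf HqS]] : exists q : 'I_N, ((q : nat) == T * T) || ((q : nat) == (T * T).+1) /\ q \in SS (w i.+1).
    by case: (Hin i.+1) => /langS [q [Hf HqS]]; exists q; move: Hf => /= ->; rewrite ?orbT.
  move: HqS; rewrite Hu -rcons_cat => HqS.
  apply: (leq_trans (Wt_rcons_lt wt_le (m := q) _ HqS)).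
    by move=> q0 x0; apply: wt_lt; case/orP: Hf => /eqP ->.
  exact: Wt_cat_le wt_le _ _.
have : forall i, Wt dA iA wt (w i) + i <= Wt dA iA wt (w 0).
  elim => [|i IH]; first by rewrite addn0.
  have := Hdec i; lia.
move=> /(_ (Wt dA iA wt (w 0)).+1); lia.
Qed.

End Aut.

Fixpoint dec (bs : seq bool) : seq bool :=
  match bs with [::] => [::] | true :: r => false :: r | false :: r => true :: dec r end.

Fixpoint vl (bs : seq bool) : nat := match bs with [::] => 0 | x :: r => x + 2 * vl r end.

Lemma size_dec bs : size (dec bs) = size bs.
Proof. by elim: bs => [|[] r IH] //=; rewrite IH. Qed.

Lemma vl_dec bs : 0 < vl bs -> vl (dec bs) = (vl bs).-1.
Proof.
elim: bs => [|[] r IH] //=.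
move=> H; rewrite IH; lia.
Qed.

Lemma vl_nseq t : vl (nseq t true) = 2 ^ t - 1.
Proof. elim: t => [|t IH] //=; rewrite IH expnS; have := expn_gt0 2 t; lia. Qed.

Lemma index_lt bs : 0 < vl bs -> index true bs < size bs.
Proof. elim: bs => [|[] r IH] //= H; rewrite ltnS IH //; lia. Qed.

Lemma nth_dec bs j : index true bs < size bs ->
  nth false (dec bs) j = if j < index true bs then true
    else if j == index true bs then false else nth false bs j.
Proof.
elim: bs j => [|[] r IH] [|j] //=.
rewrite ltnS => H; rewrite IH //.
Qed.

Section Tow.
Variable T : nat.
Hypothesis HT : 0 < T.
Local Notation N := (T * T + 2).

Definition step (bs : seq bool) : word := nseq (index true bs) true ++ [:: false].
Definition cs i := iter i dec (nseq T true).
Fixpoint pre i : word := if i is i'.+1 then pre i' ++ step (cs i') else [::].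

Lemma size_cs i : size (cs i) = T.
Proof. elim: i => [|i IH] /=; by rewrite ?size_dec ?size_nseq. Qed.

Lemma vl_cs i : i <= 2 ^ T - 1 -> vl (cs i) = 2 ^ T - 1 - i.
Proof.
elim: i => [|i IH] H; first by rewrite /cs /= vl_nseq subn0.
rewrite /cs iterS -/(cs i) vl_dec IH; lia.
Qed.

Lemma run_b (q q' : 'I_N) d : (q : nat) < T * T -> (q %/ T) + d < T ->
  (q' : nat) = q + d * T -> nfa_run (AK T) q (nseq d true) q'.
Proof.
elim: d q => [|d IH] q Hq Hd Hq'.
  by apply: val_inj; rewrite /= Hq' mul0n addn0.
have Hq2 : (q : nat) + T < T * T.
  have := divn_eq (q : nat) T; have := ltn_pmod (q : nat) HT; nia.
have Hq1 : (q : nat) + T < N by lia.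
exists (Ordinal Hq1); split.
  rewrite /= /dA /dn /= Hq eqxx andbT; lia.
apply: IH => //=.
  have -> : (q : nat) + T = q + 1 * T by rewrite mul1n.
  rewrite divnDMl //; lia.
move: Hq' => /= ->; lia.
Qed.

Lemma run_AL p w q : nfa_run (AK T) p w q -> nfa_run (AL T) p w q.
Proof.
elim: w p => [|x w IH] p //= [p' [H1 H2]]; exists p'; split => //; exact: IH.
Qed.

Lemma step_lemma bs w :
  (forall q : 'I_N, (q : nat) < T -> nth false bs q -> exists p, iA p /\ nfa_run (AK T) p w q) ->
  index true bs < size bs -> size bs = T ->
  (forall q : 'I_N, (q : nat) < T -> nth false (dec bs) q ->
       exists p, iA p /\ nfa_run (AK T) p (w ++ step bs) q) /\
  (exists p (q : 'I_N), iA p /\ (q : nat) = mk T (index true bs) /\ nfa_run (AK T) p (w ++ step bs) q).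
Proof.
move=> Hinv Hi Hs.
set nu := index true bs.
have Hnu : nu < T by rewrite -Hs.
have Hbit : nth false bs nu by apply: nth_index; rewrite -index_mem.
have HnuN : nu < N by nia.
have [p0 [Hp0 Hr0]] := Hinv (Ordinal HnuN) Hnu Hbit.
have runj : forall j (Hj : j < T), exists q1 : 'I_N, (q1 : nat) = j + nu * T /\
      forall q0 : 'I_N, (q0 : nat) = j -> nfa_run (AK T) q0 (nseq nu true) q1.
  move=> j Hj.
  have H1 : j + nu * T < N by nia.
  exists (Ordinal H1); split => // q0 Hq0; apply: run_b => //=; rewrite Hq0; last by [].
    nia.
  by rewrite divn_small //; lia.
have key : forall j, j < T -> j + nu * T < T * T /\ (j + nu * T) %/ T = nu /\ (j + nu * T) %% T = j.
  move=> j Hj; split; first nia.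
  split; first by rewrite divnDMl // divn_small.
  by rewrite addnC modnMDl modn_small.
split.
  move=> q Hq; rewrite nth_dec // -/nu.
  case: ltnP => Hlt.
    move=> _; have [q1 [E1 R1]] := runj nu Hnu.
    exists p0; split => //.
    apply: (run_cat Hr0); rewrite /step; apply: (run_cat (R1 (Ordinal HnuN) erefl)).
    exists q; split => //; rewrite /= /dA /dn E1.
    have [K1 [K2 K3]] := key nu Hnu; rewrite K1 K2 K3 eqxx /=.
    by rewrite Hlt.
  case: eqP => // Hne Hb.
  have [p [Hp Hr]] := Hinv q Hq Hb.
  have [q1 [E1 R1]] := runj q Hq.
  exists p; split => //; apply: (run_cat Hr); rewrite /step; apply: (run_cat (R1 q erefl)).
  exists q; split => //; rewrite /= /dA /dn E1.
  have [K1 [K2 K3]] := key q Hq; rewrite K1 K2 K3 /=.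
  by rewrite ifT ?eqxx //; apply/eqP => E; apply: Hne; rewrite -E.
have HmN : mk T nu < N by rewrite /mk; case: ifP; lia.
exists p0, (Ordinal HmN); split => //; split => //.
have [q1 [E1 R1]] := runj nu Hnu.
apply: (run_cat Hr0); rewrite /step; apply: (run_cat (R1 (Ordinal HnuN) erefl)).
exists (Ordinal HmN); split => //; rewrite /= /dA /dn E1.
have [K1 [K2 K3]] := key nu Hnu; rewrite K1 K2 K3 eqxx /=.
by rewrite eqxx orbT.
Qed.

Lemma inv_cs i : i <= 2 ^ T - 1 ->
  forall q : 'I_N, (q : nat) < T -> nth false (cs i) q -> exists p, iA p /\ nfa_run (AK T) p (pre i) q.
Proof.
elim: i => [|i IH] Hi q Hq.
  by move=> _; exists q; split.
have Hv : 0 < vl (cs i) by rewrite vl_cs; lia.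
have [H1 _] := step_lemma (IH (ltnW Hi)) (index_lt Hv) (size_cs i).
exact: H1.
Qed.

Lemma class_cs i : i < 2 ^ T - 1 ->
  if nth false (cs i) 0 then lang (AK T) (pre i.+1) else lang (AL T) (pre i.+1).
Proof.
move=> Hi.
have Hv : 0 < vl (cs i) by rewrite vl_cs; lia.
have [_ [p [q [Hp [Eq Hr]]]]] := step_lemma (inv_cs (ltnW Hi)) (index_lt Hv) (size_cs i).
change (nfa_run (AK T) p (pre i.+1) q) in Hr.
have Hsz := size_cs i.
case E: (cs i) Eq Hsz => [|b r] Eq Hsz /=; first by move: Hsz => /= Hs; lia.
case: b E Eq Hsz => E Eq Hsz /=.
  by exists p, q; split => //; split => //=; rewrite Eq /mk.
exists p, q; split => //; split; last exact: run_AL.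
by rewrite /= Eq /mk /=.
Qed.

End Tow.

Lemma arith c k N : exists T, [/\ 0 < T, N <= T &
  c * (T * T + 2 + (T * T + 2)) ^ k + c < 2 ^ T - 1].
Proof.
have [p Hpdef] : exists p, p = 7 * k + c + 3 + N by eexists.
have Hp : p < 2 ^ p := ltn_expl p (isT : 1 < 2).
have [T HTdef] : exists T, T = 2 ^ (2 * p) by eexists.
have HT : T = 2 ^ p * 2 ^ p by rewrite HTdef mul2n -addnn expnD.
have HT1 : (p + 1) * (p + 1) <= T by rewrite HT; nia.
exists T; split; [nia|nia|].
set X := T * T + 2 + (T * T + 2).
set E := c + 1 + (4 * p + 3) * k.
have HY : X <= 2 ^ (4 * p + 3).
  have -> : 2 ^ (4 * p + 3) = T * T * 8.
    have -> : 4 * p + 3 = 2 * p + 2 * p + 3 by lia.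
    rewrite !expnD HT expn0 !muln1 (_ : 2 ^ 3 = 8) //; nia.
  have : 0 < T by rewrite HTdef expn_gt0.
  rewrite /X; nia.
have HXk : X ^ k <= 2 ^ ((4 * p + 3) * k).
  rewrite expnM; case: (k) => [|k'] //.
  by rewrite leq_exp2r.
have Hc : c < 2 ^ c := ltn_expl c (isT : 1 < 2).
have HE : E.+2 <= T by rewrite /E; nia.
have HE2 : 2 ^ E.+2 <= 2 ^ T by rewrite leq_exp2l.
have HEE : 2 ^ E = 2 ^ c * 2 * 2 ^ ((4 * p + 3) * k) by rewrite /E !expnD expn1.
have HE4 : 2 ^ E.+2 = 2 ^ E * 4 by rewrite !expnS; lia.
have HY1 : 0 < 2 ^ ((4 * p + 3) * k) by rewrite expn_gt0.
nia.
Qed.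

Lemma nth0_dec bs : 0 < size bs -> nth false (dec bs) 0 = ~~ nth false bs 0.
Proof. by case: bs => [|[] r]. Qed.

Lemma tower_ok T (HT : 0 < T) :
  tower (lang (AK T)) (lang (AL T)) (mkseq (fun i => pre T i.+1) (2 ^ T - 1)).
Proof.
have H2 : 2 <= 2 ^ T by rewrite -{1}(expn1 2) leq_exp2l.
rewrite /tower size_mkseq; split; first lia.
split.
  rewrite nth_mkseq; last lia.
  by have := class_cs HT (i := 0) ltac:(lia); case: ifP => _ H; [left|right].
move=> i Hi.
rewrite !nth_mkseq; try lia.
have C1 := class_cs HT (i := i) ltac:(lia).
have C2 := class_cs HT (i := i.+1) Hi.
have Hd : nth false (cs T i.+1) 0 = ~~ nth false (cs T i) 0.
  by rewrite /cs iterS -/(cs T i) nth0_dec // size_cs.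
split; first by exists (step (cs T i.+1)).
rewrite Hd in C2.
split => HK; case: ifP C1 C2 => Hb /= C1 C2 //.
- by case: (disj HT HK C1).
- by case: (disj HT C1 HK).
Qed.

Theorem corollary17 :
  forall c k N : nat,
  exists n1 n2 : nat,
    [/\ 0 < n1, 0 < n2, N <= n1 + n2 &
    exists (A : nfa n1) (B : nfa n2),
      (~ exists w : nat -> word, inf_tower (lang A) (lang B) w) /\
      exists ws : seq word,
        tower (lang A) (lang B) ws /\
        c * (n1 + n2) ^ k + c < height ws].
Proof.
move=> c k N.
have [T [HT HN Hb]] := arith c k N.
exists (T * T + 2), (T * T + 2); split; try lia.
  nia.
exists (AK T), (AL T); split; first exact: (no_inf HT).
exists (mkseq (fun i => pre T i.+1) (2 ^ T - 1)); split; first exact: (tower_ok HT).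
by rewrite /height size_mkseq.
Qed.
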